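(* Let $n\ge 3$ and $1\le k\le n-2$. Then $rc^*(C_n([k]))=src^*(C_n([k]))=\lceil n/k\rceil$, where $[k]=\{1,2,\dots,k\}$.
   Context: For $n\ge 2$ and $S\subseteq\{1,\dots,n-1\}$, the circulant digraph $C_n(S)$ has vertex set $\{v_0,\dots,v_{n-1}\}$ and arcs $v_iv_j$ for all $i,j$ with $j-i\equiv s \pmod n$ for some $s\in S$. For a strongly connected digraph $D$ and an arc-colouring $\Gamma:A(D)\to\{1,\dots,k\}$, a directed path is rainbow if its arcs have pairwise distinct colours. $\Gamma$ is rainbow connected if for every ordered pair of distinct vertices $x,y$ there is a rainbow directed $xy$-path; $rc^*(D)$ is the minimum number of colours of such a colouring. $\Gamma$ is strongly rainbow connected if for every ordered pair of distinct vertices $x,y$ there is a rainbow directed $xy$-path of length $d_D(x,y)$; $src^*(D)$ is the minimum such number. *)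

(* Defs.v *)
From mathcomp Require Import all_boot.
Set Implicit Arguments. Unset Strict Implicit. Unset Printing Implicit Defensive.

Section Digraphs.
Variable V : finType.

(* [dpath arc x p y]: x :: p is a directed path from x to y
   (consecutive vertices joined by arcs, all vertices distinct).
   Its length (number of arcs) is [size p]. *)
Definition dpath (arc : rel V) (x : V) (p : seq V) (y : V) : Prop :=
  [/\ path arc x p, last x p = y & uniq (x :: p)].

Definition path_colours (T : Type) (col : V -> V -> T) (x : V) (p : seq V) : seq T :=
  pairmap col x p.

Definition rainbow (c : nat) (col : V -> V -> 'I_c) (x : V) (p : seq V) : bool :=
  uniq (path_colours col x p).

Definition strongly_connected (arc : rel V) : Prop :=
  forall x y : V, x != y -> exists p, dpath arc x p y.

(* An arc-colouring with colours {1..c} (encoded as 'I_c) is rainbow connected *)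
Definition rainbow_connected (arc : rel V) (c : nat) (col : V -> V -> 'I_c) : Prop :=
  forall x y : V, x != y -> exists p, dpath arc x p y /\ rainbow col x p.

(* strongly rainbow connected: a rainbow path of length d(x,y), i.e. a rainbow
   path no longer than any directed xy-path. *)
Definition strongly_rainbow_connected (arc : rel V) (c : nat) (col : V -> V -> 'I_c) : Prop :=
  forall x y : V, x != y -> exists p, [/\ dpath arc x p y, rainbow col x p &
     forall q, dpath arc x q y -> size p <= size q].

Definition rc_star_eq (arc : rel V) (m : nat) : Prop :=
  (exists col : V -> V -> 'I_m, rainbow_connected arc col) /\
  (forall c (col : V -> V -> 'I_c), rainbow_connected arc col -> m <= c).

Definition src_star_eq (arc : rel V) (m : nat) : Prop :=
  (exists col : V -> V -> 'I_m, strongly_rainbow_connected arc col) /\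
  (forall c (col : V -> V -> 'I_c), strongly_rainbow_connected arc col -> m <= c).

End Digraphs.

(* Circulant digraph C_n(S) on vertices v_0..v_{n-1} (= 'I_n):
   arc v_i v_j iff (j - i) mod n lies in S. *)
Definition circulant_arc (n : nat) (S : pred nat) : rel 'I_n :=
  fun i j => ((j + n - i) %% n) \in S.

Definition interval1 (k : nat) : pred nat := fun s => (1 <= s) && (s <= k).

Definition ceil_div (n k : nat) : nat := (n + k - 1) %/ k.
Arguments circulant_arc n S : clear implicits.

(* Main.v *)
Require Import Defs.
From mathcomp Require Import all_boot zify.
Set Implicit Arguments. Unset Strict Implicit. Unset Printing Implicit Defensive.

Definition dist (n u v : nat) : nat := if u <= v then v - u else v + n - u.

Lemma distE n (i j : 'I_n) : (j + n - i) %% n = dist n i j.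
Proof.
have hi := ltn_ord i; have hj := ltn_ord j.
rewrite /dist; case: (leqP i j) => h.
  have -> : j + n - i = (j - i) + n by lia.
  by rewrite modnDr modn_small //; lia.
by rewrite modn_small //; lia.
Qed.

Lemma arcE n k (i j : 'I_n) :
  circulant_arc n (interval1 k) i j = (0 < dist n i j <= k).
Proof. by rewrite /circulant_arc unfold_in /interval1 distE. Qed.

Lemma dist_lt n u v : u < n -> v < n -> dist n u v < n.
Proof. move=> hu hv; rewrite /dist; case: (leqP u v) => h; lia. Qed.

Lemma dist_tri n (a b c : 'I_n) : dist n a c <= dist n a b + dist n b c.
Proof.
have ha := ltn_ord a; have hb := ltn_ord b; have hc := ltn_ord c.
rewrite /dist; case: (leqP a c); case: (leqP a b); case: (leqP b c); lia.
Qed.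

Lemma dist_add n u t : u < n -> t < n -> dist n u ((u + t) %% n) = t.
Proof.
move=> hu ht; case: (ltnP (u + t) n) => h.
  rewrite modn_small // /dist; case: (leqP u (u+t)); lia.
have -> : u + t = (u + t - n) + n by lia.
rewrite modnDr modn_small; last lia.
rewrite /dist; case: (leqP u (u + t - n)); lia.
Qed.

Lemma dist_inv n u v t : u < n -> v < n -> dist n u v = t -> v = (u + t) %% n.
Proof.
move=> hu hv; rewrite /dist; case: (leqP u v) => h <-.
  rewrite modn_small; lia.
have -> : u + (v + n - u) = v + n by lia.
by rewrite modnDr modn_small.
Qed.

Lemma ord_gt0 n (x : 'I_n) : 0 < n.
Proof. exact: leq_ltn_trans (leq0n x) (ltn_ord x). Qed.

Definition vtx n (Hn : 0 < n) (t : nat) : 'I_n := Ordinal (ltn_pmod t Hn).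

Lemma walk_bound n k (x : 'I_n) p :
  path (circulant_arc n (interval1 k)) x p -> dist n x (last x p) <= size p * k.
Proof.
elim: p x => [|y p IH] x /=.
  by move=> _; rewrite /dist leqnn subnn.
case/andP; rewrite arcE => /andP[_ hxy] /IH hp.
apply: leq_trans (dist_tri x y (last y p)) _.
rewrite mulSn; exact: leq_add.
Qed.

Lemma uniq_size_ord c (s : seq 'I_c) : uniq s -> size s <= c.
Proof.
move=> /card_uniqP <-; apply: leq_trans (max_card _) _; by rewrite card_ord.
Qed.

Lemma vtx_modDl n (Hn : 0 < n) a b : vtx Hn (a %% n + b) = vtx Hn (a + b).
Proof. by apply: val_inj => /=; rewrite modnDml. Qed.

Definition G n (Hn : 0 < n) c (col : 'I_n -> 'I_n -> 'I_c) k t :=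
  col (vtx Hn t) (vtx Hn (t + k)).

Lemma Gmod n (Hn : 0 < n) c (col : 'I_n -> 'I_n -> 'I_c) k a b : G Hn col k (a %% n + b) = G Hn col k (a + b).
Proof. by rewrite /G vtx_modDl -addnA vtx_modDl addnA. Qed.

Lemma tight n k (Hn : 0 < n) c (col : 'I_n -> 'I_n -> 'I_c) (x : 'I_n) p :
  k < n -> path (circulant_arc n (interval1 k)) x p ->
  dist n x (last x p) = size p * k ->
  pairmap col x p = map (fun j => G Hn col k (x + j * k)) (iota 0 (size p)).
Proof.
move=> kn; elim: p x => [|y p IH] x //=.
case/andP; rewrite arcE => /andP[h0 hxy] hp heq.
have hw := walk_bound hp.
have ht := dist_tri x y (last y p).
move: heq; rewrite mulSn => heq.
have e1 : dist n x y = k by lia.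
have e2 : dist n y (last y p) = size p * k by lia.
have hy : nat_of_ord y = (x + k) %% n by apply: dist_inv => //.
have hyv : y = vtx Hn (x + k) by apply: val_inj.
rewrite (IH y hp e2).
have -> : iota 1 (size p) = map (addn 1) (iota 0 (size p)) by rewrite -iotaDl.
rewrite -map_comp; congr (_ :: _).
  rewrite /G mul0n addn0 hyv; congr (col _ _); apply: val_inj => /=.
  by rewrite modn_small.
apply: eq_map => j /=; rewrite hy Gmod; congr (G _ _ _ _); rewrite mulSn; lia.
Qed.

Lemma lower n k c (col : 'I_n -> 'I_n -> 'I_c) :
  3 <= n -> 1 <= k -> k <= n - 2 ->
  rainbow_connected (circulant_arc n (interval1 k)) col -> ceil_div n k <= c.
Proof.
move=> hn hk hkn hrc.
have Hn : 0 < n by lia.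
rewrite leqNgt; apply/negP => hlt.
have hck : c * k <= n - 1.
  by move: hlt; rewrite /ceil_div leq_divRL // mulSn; lia.
have Hw : forall x : 'I_n,
    uniq (map (fun j => G Hn col k (x + j*k)) (iota 0 c)) /\ c * k = n - 1.
  move=> x; set z := vtx Hn (x + (n-1)).
  have hz : dist n x z = n - 1 by rewrite /z /= dist_add //; lia.
  have xz : x != z.
    by apply/eqP => e; rewrite -e /dist leqnn subnn in hz; lia.
  case: (hrc x z xz) => p [[hp hl hu] hr].
  have hs : size p <= c.
    by move: hr; rewrite /rainbow => /uniq_size_ord; rewrite /path_colours size_pairmap.
  have hb := walk_bound hp; rewrite hl hz in hb.
  have hpk : size p * k <= c * k by rewrite leq_mul2r hs orbT.
  have ec : size p = c.
    apply/eqP; rewrite -(eqn_pmul2r hk) eqn_leq hpk; exact: leq_trans hck hb.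
  have eck : c * k = n - 1 by apply/eqP; rewrite eqn_leq hck /= -ec.
  split => //.
  have ht : dist n x (last x p) = size p * k by rewrite hl hz ec eck.
  move: hr; rewrite /rainbow /path_colours (@tight n k Hn c col x p _ hp ht) ?ec //; lia.
have [_ ec] := Hw (Ordinal Hn).
have Wt : forall t : nat, uniq (map (fun j => G Hn col k (t + j*k)) (iota 0 c)).
  move=> t; have [h _] := Hw (vtx Hn t).
  by move: h; congr (uniq _); apply: eq_map => j /=; rewrite Gmod.
have GE : forall t, G Hn col k (t %% n) = G Hn col k t.
  by move=> t; have := Gmod Hn col k t 0; rewrite !addn0.
case: c col hrc hlt hck Hw ec Wt GE => [|[|c1]] col hrc hlt hck Hw ec Wt GE.
- lia.
- lia.
have per : forall t, G Hn col k (t + c1.+2 * k) = G Hn col k t.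
  move=> t; apply/eqP; apply/negPn/negP => hne.
  have h1 := Wt t; have h2 := Wt (t + k).
  set S := map (fun j => G Hn col k (t + j.+1 * k)) (iota 0 c1.+1).
  have e1 : map (fun j => G Hn col k (t + j*k)) (iota 0 c1.+2)
            = G Hn col k t :: S.
    have -> : iota 0 c1.+2 = 0 :: map (addn 1) (iota 0 c1.+1) by rewrite -iotaDl.
    by rewrite map_cons mul0n addn0 /S -map_comp.
  have e2 : map (fun j => G Hn col k (t + k + j*k)) (iota 0 c1.+2)
            = S ++ [:: G Hn col k (t + c1.+2 * k)].
    have -> : iota 0 c1.+2 = iota 0 c1.+1 ++ [:: c1.+1] by rewrite -addn1 iotaD.
    rewrite map_cat /S; congr (_ ++ _).
      by apply: eq_map => j /=; rewrite mulSn addnA.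
    rewrite /=; congr [:: G _ _ _ _]; rewrite !mulSn; lia.
  have sS : size S = c1.+1 by rewrite /S size_map size_iota.
  clearbody S; rewrite e1 in h1; rewrite e2 in h2.
  move: h1; rewrite cons_uniq => /andP[nin uS].
  move: h2; rewrite cat_uniq /= orbF andbT => /andP[_ nin2].
  have : uniq (G Hn col k (t + c1.+2 * k) :: G Hn col k t :: S).
    by rewrite !cons_uniq inE negb_or hne nin uS nin2.
  move/uniq_size_ord; rewrite /= sS; lia.
have step : forall t, G Hn col k t.+1 = G Hn col k t.
  move=> t; rewrite -(per t.+1) ec.
  have -> : t.+1 + (n - 1) = t + n by lia.
  by rewrite -GE modnDr GE.
have cst : forall t, G Hn col k t = G Hn col k 0.
  by elim=> // t IH; rewrite step.
have := Wt 0; rewrite (@eq_map _ _ _ (fun=> G Hn col k 0)); last by move=> j; exact: cst.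
by rewrite /= inE eqxx.
Qed.

Lemma iota0S m : iota 0 m.+1 = 0 :: map (addn 1) (iota 0 m).
Proof. by rewrite -iotaDl. Qed.

Lemma path_prog k a s m : 0 < k -> a < s <= a + k ->
  path (fun a b => a < b <= a + k) a (map (fun j => s + j * k) (iota 0 m)).
Proof.
move=> hk; elim: m a s => [|m IH] a s h //.
rewrite iota0S map_cons -map_comp /= mul0n addn0 h /=.
have -> : [seq (fun j => s + j * k) ((addn 1) x) | x <- iota 0 m]
        = [seq (s + k) + j * k | j <- iota 0 m].
  by apply: eq_map => j /=; rewrite mulnDl mul1n; lia.
apply: IH; lia.
Qed.

Lemma last_prog k a s m : last a (map (fun j => s + j * k) (iota 0 m.+1)) = s + m * k.
Proof.
elim: m a s => [|m IH] a s; first by rewrite /= mul0n.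
rewrite iota0S map_cons -map_comp last_cons.
have -> : [seq (fun j => s + j * k) ((addn 1) x) | x <- iota 0 m.+1]
        = [seq (s + k) + j * k | j <- iota 0 m.+1].
  by apply: eq_map => j /=; rewrite mulnDl mul1n; lia.
rewrite IH mulSn; lia.
Qed.

Lemma mem_prog s k m t : t \in map (fun j => s + j * k) (iota 0 m) ->
  exists2 j, j < m & t = s + j * k.
Proof. by case/mapP => j; rewrite mem_iota add0n => /andP[_ hj] ->; exists j. Qed.

Lemma ceil_facts D k : 0 < k -> let d := ceil_div D k in D <= d * k /\ d * k < D + k.
Proof.
move=> hk d; have h1 := divn_eq (D + k - 1) k; have h2 := ltn_pmod (D + k - 1) hk.
rewrite /d /ceil_div; lia.
Qed.

Lemma colours_prog n k s m : 0 < k -> (forall j, j < m -> s + j * k < n) ->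
  map (fun t => (t %% n) %/ k) (map (fun j => s + j * k) (iota 0 m)) = iota (s %/ k) m.
Proof.
move=> hk hlt; rewrite -map_comp -[s %/ k]addn0 iotaDl; apply/eq_in_map => j.
rewrite mem_iota add0n => /andP[_ hj] /=.
by rewrite modn_small ?hlt // addnC divnMDl // addnC.
Qed.

Lemma colours_low n k a m : 0 < k -> a < k -> (forall j, j < m -> a + j * k < n) ->
  map (fun t => (t %% n) %/ k) (map (fun j => n + a + j * k) (iota 0 m)) = iota 0 m.
Proof.
move=> hk ha hlt; rewrite -map_comp.
transitivity (map (addn 0) (iota 0 m)); last by rewrite -iotaDl.
apply/eq_in_map => j; rewrite mem_iota add0n => /andP[_ hj] /=.
by rewrite -addnA modnDl modn_small ?hlt // addnC divnMDl // divn_small // addn0 add0n.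
Qed.

Lemma targets n k x y : 0 < k -> k < n -> x < n -> y < n -> x != y ->
  exists T : seq nat, [/\ path (fun a b => a < b <= a + k) x T, last x T %% n = y,
   size T = ceil_div (dist n x y) k, all (fun t => t %% n != x) T &
   uniq (map (fun t => (t %% n) %/ k) T)].
Proof.
move=> hk kn hx hy; case: (ltngtP x y) => hxy // _.
- have hD : dist n x y = y - x by rewrite /dist ltnW.
  rewrite hD; have [] := ceil_facts (y - x) hk.
  move: (ceil_div (y - x) k) => [|d] h1 h2; first lia.
  rewrite mulSn in h1 h2.
  exists (map (fun j => (x + (y - x) - d * k) + j * k) (iota 0 d.+1)); split.
  + apply: path_prog => //; lia.
  + rewrite last_prog modn_small; lia.
  + by rewrite size_map size_iota.
  + apply/allP => t /mem_prog [j hj ->].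
    have hjk : j * k <= d * k by apply: leq_mul; lia.
    rewrite modn_small; lia.
  + rewrite colours_prog ?iota_uniq // => j hj.
    have hjk : j * k <= d * k by apply: leq_mul; lia.
    lia.
- have hD : dist n x y = y + n - x by rewrite /dist leqNgt hxy.
  rewrite hD; have [] := ceil_facts (y + n - x) hk.
  move: (ceil_div (y + n - x) k) => d h1 h2.
  have hyq := divn_eq y k; have hr := ltn_pmod y hk.
  move: hyq hr; set q := y %/ k; set rho := y %% k => hyq hr.
  have hqd : q < d by rewrite -(ltn_pmul2r hk); lia.
  have [p Ed] : exists p, d = p + q.+1 by exists (d - q.+1); lia.
  subst d; rewrite mulnDl mulSn in h1 h2.
  have Lall : all (fun t => t %% n != x) (map (fun j => n + rho + j * k) (iota 0 q.+1)).
    apply/allP => t /mem_prog [j hj ->].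
    have hjk : j * k <= q * k by apply: leq_mul; lia.
    rewrite -addnA modnDl modn_small; lia.
  have Lcol : map (fun t => (t %% n) %/ k) (map (fun j => n + rho + j * k) (iota 0 q.+1))
              = iota 0 q.+1.
    apply: colours_low => // j hj.
    have hjk : j * k <= q * k by apply: leq_mul; lia.
    lia.
  have Llast : forall a, last a (map (fun j => n + rho + j * k) (iota 0 q.+1)) %% n = y.
    by move=> a; rewrite last_prog -addnA modnDl modn_small; lia.
  clear hqd; case: p h1 h2 => [|p] h1 h2.
  + rewrite mul0n add0n in h1 h2.
    exists (map (fun j => n + rho + j * k) (iota 0 q.+1)); split => //.
    * apply: path_prog => //; lia.
    * by rewrite size_map size_iota.
    * by rewrite Lcol iota_uniq.
  + rewrite mulSn in h1 h2.
    set c := minn (k - 1 - rho) (k - (y + n - x + k - (k + p * k + (k + q * k)))).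
    set b := n + rho + c - (k + p * k).
    have hc1 : c <= k - 1 - rho by rewrite /c geq_minl.
    have hc2 : c <= k - (y + n - x + k - (k + p * k + (k + q * k))) by rewrite /c geq_minr.
    have hc3 : c = k - 1 - rho \/ c = k - (y + n - x + k - (k + p * k + (k + q * k))).
      rewrite /c; lia.
    have hb1 : x < b <= x + k by rewrite /b; lia.
    have hb2 : b + p * k < n + rho <= b + p * k + k by rewrite /b; lia.
    have hb3 : b + p * k < n by rewrite /b; lia.
    have hbq : q.+1 <= b %/ k by rewrite leq_divRL // mulSn /b; lia.
    exists (map (fun j => b + j * k) (iota 0 p.+1) ++
            map (fun j => n + rho + j * k) (iota 0 q.+1)); split.
    * rewrite cat_path path_prog // last_prog path_prog //.
    * by rewrite last_cat Llast.
    * by rewrite size_cat !size_map !size_iota addSn addnS.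
    * rewrite all_cat Lall andbT; apply/allP => t /mem_prog [j hj ->].
      have hjk : j * k <= p * k by apply: leq_mul; lia.
      rewrite modn_small; lia.
    * rewrite map_cat Lcol colours_prog //; last first.
        move=> j hj; have hjk : j * k <= p * k by apply: leq_mul; lia.
        lia.
      rewrite cat_uniq !iota_uniq andbT andTb; apply/hasPn => z; rewrite !mem_iota; lia.
Qed.

Lemma colour_lt n k (hk : 0 < k) (w : 'I_n) : w %/ k < ceil_div n k.
Proof.
have hw := ltn_ord w; have h := leq_trunc_div w k.
rewrite /ceil_div leq_divRL // mulSn; lia.
Qed.

Lemma pairmap_target (T U : Type) (g : T -> U) x p :
  pairmap (fun _ w => g w) x p = map g p.
Proof. by elim: p x => //= a p IH x; rewrite IH. Qed.

Lemma upper n k : 3 <= n -> 1 <= k -> k <= n - 2 ->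
  exists col : 'I_n -> 'I_n -> 'I_(ceil_div n k),
    strongly_rainbow_connected (circulant_arc n (interval1 k)) col.
Proof.
move=> hn hk hkn.
have Hn : 0 < n by lia.
have kn : k < n by lia.
exists (fun _ w => Ordinal (@colour_lt n k hk w)) => x y xy.
have xy' : (x : nat) != y by [].
have [T [hT hl hs hall hu]] := targets hk kn (ltn_ord x) (ltn_ord y) xy'.
have vx : vtx Hn x = x by apply: val_inj; rewrite /= modn_small.
exists (map (vtx Hn) T); split.
- split.
  + rewrite -{1}vx path_map; apply: sub_path hT => a b /andP[hab hb].
    rewrite /relpre /= arcE /=.
    have -> : b = a + (b - a) by lia.
    rewrite -modnDml dist_add ?ltn_pmod //; lia.
  + by rewrite -{1}vx last_map; apply: val_inj => /=.
  + rewrite cons_uniq; apply/andP; split.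
      apply/mapP => [[t ht e]]; move/allP: hall => /(_ t ht).
      by rewrite e /= eqxx.
    apply: (@map_uniq _ _ (fun w : 'I_n => (w : nat) %/ k)).
    rewrite -map_comp; exact: hu.
- rewrite /rainbow /path_colours pairmap_target.
  apply: (@map_uniq _ _ val); rewrite -!map_comp; exact: hu.
- move=> q [hq hlq hqu]; rewrite size_map hs.
  have hb := walk_bound hq; rewrite hlq in hb.
  rewrite /ceil_div -ltnS ltn_divLR // mulSn.
  move: hb; move: (dist n x y) (size q * k) => D S hb; lia.
Qed.

Theorem theorem6 (n k : nat) :
  3 <= n -> 1 <= k -> k <= n - 2 ->
  rc_star_eq (circulant_arc n (interval1 k)) (ceil_div n k) /\
  src_star_eq (circulant_arc n (interval1 k)) (ceil_div n k).
Proof.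
move=> hn hk hkn.
have [col hs] := upper hn hk hkn.
split; split.
- exists col => x y xy; have [p [hp hr _]] := hs x y xy; by exists p.
- by move=> c col' h; exact: (lower hn hk hkn h).
- by exists col.
- move=> c col' h; apply: (@lower n k c col' hn hk hkn) => x y xy.
  have [p [hp hr _]] := h x y xy; by exists p.
Qed.
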